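(* If a language $\mathcal L\subseteq\mathcal A^*$ satisfies RBC, then it has eventually constant growth: there are $N_0,K$ such that $p(n+1)-p(n)=K$ for all $n\ge N_0$.
   Context: $\mathcal{A}$ finite alphabet, $\mathcal{A}^*$ nonempty finite words. A language is a set $\mathcal L\subseteq\mathcal A^*$ with $\mathcal A\subseteq\mathcal L$, closed under subwords, and such that each $w\in\mathcal L$ has $a,b\in\mathcal A$ with $awb\in\mathcal L$. $p(n)$ is the number of words of length $n$ in $\mathcal L$. $Ex^\ell(w)=\{a: aw\in\mathcal L\}$, $Ex^r(w)=\{b: wb\in\mathcal L\}$; left special if $|Ex^\ell(w)|\ge2$, right special if $|Ex^r(w)|\ge 2$, bispecial if both. A bispecial $w$ is regular bispecial if there is exactly one $\hat a\in Ex^\ell(w)$ with $\hat aw$ right special and exactly one $\hat b\in Ex^r(w)$ with $w\hat b$ left special. RBC: there is $n_0$ such that every bispecial word of length $\ge n_0$ is regular bispecial. *)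

(* Defs.v *)
From mathcomp Require Import all_boot all_order all_algebra.
Set Implicit Arguments. Unset Strict Implicit. Unset Printing Implicit Defensive.

Section Lang.
Variable A : finType.
Variable L : pred (seq A).

Definition is_language : Prop :=
  [/\ (forall w, w \in L -> w != [::]),
      (forall a : A, [:: a] \in L),
      (forall u v w, (u ++ v ++ w) \in L -> v != [::] -> v \in L)
    & (forall w, w \in L -> exists a b : A, (a :: w ++ [:: b]) \in L)].

Definition complexity (n : nat) : nat := #|[set t : n.-tuple A | tval t \in L]|.

Definition Exl (w : seq A) : {set A} := [set a | (a :: w) \in L].
Definition Exr (w : seq A) : {set A} := [set b | (w ++ [:: b]) \in L].

Definition left_special (w : seq A) : bool := 2 <= #|Exl w|.
Definition right_special (w : seq A) : bool := 2 <= #|Exr w|.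
Definition bispecial (w : seq A) : bool := left_special w && right_special w.

Definition regular_bispecial (w : seq A) : bool :=
  [&& bispecial w,
      #|[set a in Exl w | right_special (a :: w)]| == 1
    & #|[set b in Exr w | left_special (w ++ [:: b])]| == 1].

Definition RBC : Prop :=
  exists n0 : nat, forall w, w \in L -> bispecial w -> n0 <= size w ->
    regular_bispecial w.
End Lang.

(* Main.v *)
Require Import Defs.
From mathcomp Require Import all_boot all_order all_algebra.
From Stdlib Require Import Classical.
Set Implicit Arguments. Unset Strict Implicit. Unset Printing Implicit Defensive.

Section Aux.
Variable A : finType.
Variable L : pred (seq A).

Definition Ln n := [set t : n.-tuple A | tval t \in L].

Lemma sum_ext n (h : n.-tuple A -> A -> n.+1.-tuple A) (F : seq A -> nat) :
  (forall t a t' a', h t a = h t' a' -> t = t' /\ a = a') ->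
  (forall u : n.+1.-tuple A, exists t a, u = h t a) ->
  (forall t a, tval (h t a) \in L -> tval t \in L) ->
  \sum_(u in Ln n.+1) F u = \sum_(t in Ln n) \sum_(a | tval (h t a) \in L) F (h t a).
Proof.
move=> hinj hsurj hmem.
rewrite pair_big_dep /=.
pose hp := fun p : n.-tuple A * A => h p.1 p.2.
have -> : Ln n.+1 = hp @: [set p | tval (hp p) \in L].
  apply/setP => u; rewrite inE; apply/idP/imsetP.
    move=> Hu; have [t [a E]] := hsurj u; exists (t, a); rewrite ?inE /hp /= -?E //.
  by move=> [p]; rewrite inE => Hp ->.
rewrite big_imset /=; last first.
  move=> [t a] [t' a'] _ _ /= E; have [E1 E2] := hinj _ _ _ _ E; by move: E1 E2 => /= -> ->.
apply: eq_big => // [[t a]] /=; rewrite !inE /=.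
apply/idP/andP => [H|[]//]; split => //; exact: hmem H.
Qed.
End Aux.

Section Main.
Variable A : finType.
Variable L : pred (seq A).
Hypothesis HL : is_language L.

Lemma sub_mem u v w : (u ++ v ++ w) \in L -> v != [::] -> v \in L.
Proof. by case: HL => _ _ H _; apply: H. Qed.

Lemma sum_cons n (F : seq A -> nat) : 0 < n ->
  \sum_(u in Ln L n.+1) F u = \sum_(t in Ln L n) \sum_(a in Exl L t) F (a :: t).
Proof.
move=> n0.
rewrite (@sum_ext A L n (fun t a => [tuple of a :: t])) /=.
- apply: eq_bigr => t _; apply: eq_bigl => a; by rewrite inE.
- move=> t a t' a' /(congr1 val) [-> E]; split => //; exact: val_inj.
- by move=> u; case/tupleP: u => x t; exists t, x.
- move=> t a H; apply: (@sub_mem [:: a] t [::]); first by rewrite cats0.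
  by rewrite -size_eq0 size_tuple -lt0n.
Qed.

Lemma sum_rcons n (F : seq A -> nat) : 0 < n ->
  \sum_(u in Ln L n.+1) F u = \sum_(t in Ln L n) \sum_(b in Exr L t) F (rcons t b).
Proof.
move=> n0.
rewrite (@sum_ext A L n (fun t a => [tuple of rcons t a])) /=.
- apply: eq_bigr => t _; apply: eq_bigl => a; by rewrite inE cats1.
- move=> t a t' a' /(congr1 val) /= /rcons_inj [E ->]; split => //; exact: val_inj.
- move=> u; case/tupleP: u => x t; exists [tuple of belast x t], (last x t).
  by apply: val_inj; rewrite /= -lastI.
- move=> t a H; apply: (@sub_mem [::] t [:: a]); first by rewrite /= cats1.
  by rewrite -size_eq0 size_tuple -lt0n.
Qed.

Lemma exr_pos (t : seq A) : t \in L -> 0 < #|Exr L t|.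
Proof.
case: HL => _ _ _ He /He [a [b H]].
apply/card_gt0P; exists b; rewrite inE.
apply: (@sub_mem [:: a] (t ++ [:: b]) [::]); first by rewrite cats0.
by case: t H.
Qed.

Lemma exr_sub (a : A) (t : seq A) : Exr L (a :: t) \subset Exr L t.
Proof.
apply/subsetP => b; rewrite !inE => H.
apply: (@sub_mem [:: a] (t ++ [:: b]) [::]); first by rewrite cats0.
by case: t H.
Qed.

Definition s n := \sum_(t in Ln L n) (#|Exr L t| - 1).

Lemma p_step n : 0 < n -> complexity L n.+1 = s n + complexity L n.
Proof.
move=> n0.
rewrite /complexity -!sum1_card.
rewrite (sum_rcons (fun _ => 1) n0) /s -big_split /=.
apply: eq_bigr => t; rewrite inE => Ht.
rewrite sum1_card subn1 addn1 prednK //; exact: exr_pos.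
Qed.

Lemma s_dec n0 n :
  (forall w, w \in L -> bispecial L w -> n0 <= size w -> regular_bispecial L w) ->
  0 < n -> n0 <= n -> s n.+1 <= s n.
Proof.
move=> Hn0 npos hn.
rewrite /s (sum_cons (fun u => #|Exr L u| - 1) npos); apply: leq_sum => t; rewrite inE => Ht.
set c := #|Exr L t| - 1.
have gle a : #|Exr L (a :: t)| - 1 <= c.
  by apply: leq_sub2r; apply: subset_leq_card; exact: exr_sub.
set S := [set a in Exl L t | right_special L (a :: t)].
have hS : #|S| <= 1.
  case Hb: (bispecial L t).
    have := Hn0 _ Ht Hb; rewrite size_tuple => /(_ hn) /and3P [_ /eqP -> _] //.
  move: Hb; rewrite /bispecial; case Hl: (left_special L t) => /= Hr.
    have -> : S = set0.
      apply/setP => a; rewrite !inE /right_special.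
      apply/negbTE; rewrite negb_and -ltnNge; apply/orP; right.
      apply: leq_ltn_trans (subset_leq_card (exr_sub a t)) _.
      move: Hr; rewrite /right_special => /negbT; rewrite -ltnNge //.
    by rewrite cards0.
  apply: leq_trans (subset_leq_card (_ : S \subset Exl L t)) _.
    by apply/subsetP => a; rewrite inE => /andP [].
  move: Hl; rewrite /left_special => /negbT; rewrite -ltnNge ltnS //.
rewrite (bigID (mem S)) /=.
rewrite [X in _ + X]big1 ?addn0; last first.
  move=> a /andP [Ha Hna]; apply/eqP; rewrite subn_eq0.
  move: Hna; rewrite /S in_set Ha /= /right_special -ltnNge ltnS //.
rewrite (eq_bigl (mem S)); last first.
  move=> a /=; rewrite /S in_set; by case: (a \in Exl L t).
apply: leq_trans (_ : \sum_(a in S) c <= _).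
  by apply: leq_sum => a _; apply: gle.
rewrite sum_nat_const; by rewrite -[X in _ <= X]mul1n leq_mul2r hS orbT.
Qed.
End Main.

Lemma chain (f : nat -> nat) N : (forall n, N <= n -> f n.+1 <= f n) ->
  forall m n, N <= m -> m <= n -> f n <= f m.
Proof.
move=> H m n Nm; elim: n => [|n IH]; first by rewrite leqn0 => /eqP ->.
rewrite leq_eqVlt ltnS => /orP [/eqP <- // | mn].
exact: leq_trans (H _ (leq_trans Nm mn)) (IH mn).
Qed.

Lemma ev_const (f : nat -> nat) N : (forall n, N <= n -> f n.+1 <= f n) ->
  exists M, N <= M /\ forall n, M <= n -> f n = f M.
Proof.
suff: forall k N, f N <= k -> (forall n, N <= n -> f n.+1 <= f n) ->
  exists M, N <= M /\ forall n, M <= n -> f n = f M.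
  by move=> /(_ (f N) N (leqnn _)).
elim=> [|k IH] N0 hk hdec;
 (destruct (classic (exists n, N0 <= n /\ f n <> f N0)) as [[n [hn ne]] | nex];
  [ | exists N0; split => // n hn; apply: NNPP => ne; apply: nex; by exists n]).
- exfalso; apply: ne; apply/eqP; rewrite eqn_leq (leq_trans (@chain f N0 hdec _ _ (leqnn _) hn)) //.
  by move: hk; rewrite leqn0 => /eqP ->.
- have lt : f n < f N0.
    rewrite ltn_neqAle (@chain f N0 hdec _ _ (leqnn _) hn) andbT; exact/eqP.
  have [M [nM HM]] := IH n (leq_trans lt hk) (fun m hm => hdec m (leq_trans hn hm)).
  exists M; split => //; exact: leq_trans hn nM.
Qed.

Local Open Scope ring_scope.

Theorem mainTheorem3 (A : finType) (L : pred (seq A)) :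
  is_language L -> RBC L ->
  exists (N0 : nat) (K : int), forall n : nat, (N0 <= n)%N ->
    (complexity L n.+1)%:Z - (complexity L n)%:Z = K.
Proof.
move=> HL [n0 Hn0].
have hdec : forall n, (maxn 1 n0 <= n)%N -> (s L n.+1 <= s L n)%N.
  move=> n; rewrite geq_max => /andP [h1 h2]; exact: (@s_dec A L HL n0 n Hn0 h1 h2).
have [M [hM HM]] := ev_const hdec.
exists M, (s L M)%:Z => n hn.
have n1 : (0 < n)%N by apply: leq_trans hn; apply: leq_trans hM; rewrite leq_maxl.
rewrite (p_step HL n1) PoszD GRing.addrK HM //.
Qed.
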